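(* The boxed ramified monoid $\mathcal{BR}(\mathfrak{S}_n)$ is generated by $e_1,\ldots,e_{n-1}$ and $z_1,\ldots,z_{n-1}$.
   Context: $\mathfrak{C}_n$ is the partition monoid: set partitions of $[2n]$ (top points $1,\dots,n$, bottom points $n+1,\dots,2n$) with concatenation product $I*J$ (identify bottom point $n+i$ of $I$ with top point $i$ of $J$, join blocks transitively, delete the middle points). $I\preceq J$ means each block of $J$ is a union of blocks of $I$. $\mathfrak{S}_n\subseteq\mathfrak{C}_n$ consists of the partitions with all blocks of the form $\{i,n+j\}$; $s_i$ is the simple transposition; $1=\{\{i,n+i\}\}$. A set partition $J$ of $[2n]$ is boxed if $1\preceq J$ and the restriction of $J$ to $[n]$ is linear (all blocks intervals). For a submonoid $M\subseteq\mathfrak{C}_n$, $\mathcal{BR}(M)$ is the set of pairs $(I,J)$ with $I\in M$, $J$ boxed and $I\preceq J$, with product $(I,J)(H,K)=(I*H,J*K)$. Let $b_i$ be obtained from $1$ by merging the blocks $\{i,n+i\}$ and $\{i+1,n+i+1\}$; set $e_i=(1,b_i)$ and $z_i=(s_i,b_i)$ for $i\in[n-1]$. *)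

(* Defs.v *)
From mathcomp Require Import all_boot all_order.
Set Implicit Arguments. Unset Strict Implicit. Unset Printing Implicit Defensive.

(* Points of [2n], 0-indexed: top points 0..n-1 (paper: 1..n),
   bottom points n..2n-1 (paper: n+1..2n). *)
Definition pt (n : nat) := 'I_(n + n).

(* A (candidate) set partition of [2n] is represented by its equivalence
   relation, as a finite set of pairs ("x and y lie in the same block"). *)
Definition part (n : nat) := {set (pt n * pt n)}.

Definition is_setpart n (I : part n) : bool :=
  [&& [forall x, (x, x) \in I],
      [forall x, forall y, ((x, y) \in I) ==> ((y, x) \in I)] &
      [forall x, forall y, forall z,
         ((x, y) \in I) && ((y, z) \in I) ==> ((x, z) \in I)]].

Definition pblk n (I : part n) (x : pt n) : {set pt n} := [set y | (x, y) \in I].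

Definition prefines n (I J : part n) : bool :=
  [forall x, pblk J x == \bigcup_(y in pblk J x) pblk I y].

(* Nodes: inl x = point x of (a copy of) I,
   inr y = point y of (a copy of) J; bottom point n+i of I is identified
   with top point i of J.  Blocks are joined transitively (connect), and the
   result is read off on the top points of I and the bottom points of J. *)
Definition pedge n (I J : part n) : rel (pt n + pt n) := fun u v =>
  match u, v with
  | inl x, inl y => (x, y) \in I
  | inr x, inr y => (x, y) \in J
  | inl x, inr y => (nat_of_ord x == n + y) && (y < n)
  | inr y, inl x => (nat_of_ord x == n + y) && (y < n)
  end.

Definition pnode n (x : pt n) : pt n + pt n := if x < n then inl x else inr x.

Definition pmul n (I J : part n) : part n :=
  [set p | connect (pedge I J) (pnode p.1) (pnode p.2)].

Definition part_of_lab n (f : nat -> nat) : part n :=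
  [set p : pt n * pt n | f p.1 == f p.2].

Definition pid n : part n := part_of_lab n (fun x => x %% n).

Definition in_Sn n (I : part n) : bool :=
  is_setpart I &&
  [forall x, (#|[set y in pblk I x | y < n]| == 1) &&
             (#|[set y in pblk I x | n <= y]| == 1)].

(* Boxed: 1 <= J and the restriction of J to the top points is linear
   (all its blocks are intervals). *)
Definition boxed n (J : part n) : bool :=
  [&& is_setpart J, prefines (pid n) J &
      [forall x : pt n, forall y : pt n, forall z : pt n,
         [&& z < n, x <= y, y <= z & (x, z) \in J] ==> ((x, y) \in J)]].

Definition in_BR n (p : part n * part n) : bool :=
  [&& in_Sn p.1, boxed p.2 & prefines p.1 p.2].

Definition brmul n (p q : part n * part n) : part n * part n :=
  (pmul p.1 q.1, pmul p.2 q.2).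

Definition brid n : part n * part n := (pid n, pid n).

(* 0-indexed generators: index i (0 <= i < n-1) stands for the paper's i+1. *)
(* b_i : merge the blocks {i, n+i} and {i+1, n+i+1} of 1. *)
Definition bgen n (i : nat) : part n :=
  part_of_lab n (fun x => let k := x %% n in if k == i.+1 then i else k).

Definition sgen n (i : nat) : part n :=
  part_of_lab n (fun x =>
    if x < n then x
    else let k := x - n in if k == i then i.+1 else if k == i.+1 then i else k).

Definition egen n (i : nat) : part n * part n := (pid n, bgen n i).
Definition zgen n (i : nat) : part n * part n := (sgen n i, bgen n i).

Definition BR_gens n : seq (part n * part n) :=
  [seq egen n i | i <- iota 0 n.-1] ++ [seq zgen n i | i <- iota 0 n.-1].

Definition brprod n (s : seq (part n * part n)) : part n * part n :=
  foldr (@brmul n) (brid n) s.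

(* Main.v *)
Require Import Defs.
From mathcomp Require Import all_boot all_order.
From mathcomp Require Import zify.
Set Implicit Arguments. Unset Strict Implicit. Unset Printing Implicit Defensive.


Fixpoint rep (S : nat -> bool) (k : nat) : nat :=
  if k is k'.+1 then (if S k' then rep S k' else k) else 0.

Lemma rep_le S k : rep S k <= k.
Proof. elim: k => //= k IH; case: (S k) => //; lia. Qed.

Lemma rep_S S k : rep S k.+1 = (if S k then rep S k else k.+1).
Proof. by []. Qed.

Lemma rep_mono S a b : a <= b -> rep S a <= rep S b.
Proof.
move=> ab; elim: b ab => [|b IH]; first by rewrite leqn0 => /eqP ->.
rewrite leq_eqVlt => /orP [/eqP -> //| ab].
rewrite rep_S; case: (S b); first by apply: IH.
by apply: leq_trans (IH ab) _; apply: leq_trans (rep_le S b) _.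
Qed.

Lemma rep_eq S a b : a <= b -> (rep S a = rep S b <-> forall k, a <= k < b -> S k).
Proof.
move=> ab; split.
- move=> E k /andP [ak kb].
  have h1 := rep_mono S ak. have h2 := rep_mono S kb. rewrite E in h1.
  case Sk: (S k) => //.
  have := rep_le S k. move: h2; rewrite rep_S Sk. lia.
- elim: b ab => [|b IH]; first by rewrite leqn0 => /eqP ->.
  rewrite leq_eqVlt => /orP [/eqP -> //| ab] H.
  rewrite rep_S (H b); last by lia.
  by apply: IH; [lia| move=> k hk; apply: H; lia].
Qed.

Lemma rep_sub (S U : nat -> bool) a b : (forall k, S k -> U k) -> rep S a = rep S b -> rep U a = rep U b.
Proof.
move=> SU.
wlog ab : a b / a <= b.
  move=> hw; case/orP: (leq_total a b) => h; first by apply: hw.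
  by move=> E; symmetry; apply: hw => //.
move=> /(rep_eq S ab) H; apply/(rep_eq U ab) => k hk; apply: SU; exact: H.
Qed.

Lemma rep_ext (S T : nat -> bool) k : (forall j, j < k -> S j = T j) -> rep S k = rep T k.
Proof.
elim: k => //= k IH H; rewrite H // IH // => j jk; apply: H; lia.
Qed.


Definition plab n (s : nat -> nat) (x : nat) := if x < n then x else s (x - n).
Definition Plab n (s : nat -> nat) : part n := part_of_lab n (plab n s).
Definition Blab n (S : nat -> bool) : part n := part_of_lab n (fun x => rep S (x %% n)).

Lemma lab_setpart n f : is_setpart (part_of_lab n f).
Proof.
apply/and3P; split.
- by apply/forallP => x; rewrite inE.
- by apply/forallP => x; apply/forallP => y; apply/implyP; rewrite !inE eq_sym.
- apply/forallP => x; apply/forallP => y; apply/forallP => z; apply/implyP.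
  by rewrite !inE => /andP [/eqP -> /eqP ->].
Qed.

Section SP.
Variables (n : nat) (I : part n) (HI : is_setpart I).
Lemma sp_refl x : (x, x) \in I.
Proof. by case/and3P: HI => /forallP H _ _. Qed.
Lemma sp_sym x y : (x, y) \in I -> (y, x) \in I.
Proof. by case/and3P: HI => _ /forallP H _; move: (H x) => /forallP /(_ y) /implyP. Qed.
Lemma sp_trans x y z : (x, y) \in I -> (y, z) \in I -> (x, z) \in I.
Proof.
case/and3P: HI => _ _ /forallP H a b; move: (H x) => /forallP /(_ y) /forallP /(_ z) /implyP.
by apply; rewrite a b.
Qed.
End SP.

Lemma prefines_sub n (I J : part n) x y :
  prefines I J -> is_setpart J -> (x, y) \in I -> (x, y) \in J.
Proof.
move=> /forallP /(_ x) /eqP /setP /(_ y) H HJ xy.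
move: H; rewrite inE => ->; apply/bigcupP; exists x; rewrite inE //.
exact: sp_refl.
Qed.

Lemma prefinesI n (I J : part n) :
  (forall x, (x, x) \in I) -> (forall x y z, (x, y) \in J -> (y, z) \in I -> (x, z) \in J) ->
  prefines I J.
Proof.
move=> Ir H; apply/forallP => x; apply/eqP/setP => z; rewrite inE.
apply/idP/bigcupP.
- by move=> xz; exists z; rewrite inE //.
- by move=> [y]; rewrite !inE; apply: H.
Qed.

Lemma connect_lab (T : finType) (e : rel T) (U : eqType) (f : T -> U) :
  (forall u v, e u v -> f u = f v) -> forall u v, connect e u v -> f u = f v.
Proof.
move=> H u v /connectP [p pth ->]; elim: p u pth => //= w p IH u /andP [uw pth].
by rewrite (H _ _ uw); apply: IH.
Qed.

Lemma pedge_sym n (I J : part n) : is_setpart I -> is_setpart J -> symmetric (pedge I J).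
Proof.
move=> HI HJ [x|x] [y|y] /=.
- by apply/idP/idP; apply: sp_sym.
- by [].
- by [].
- by apply/idP/idP; apply: sp_sym.
Qed.

Lemma ex_pt n k : k < n + n -> exists t : pt n, val t = k.
Proof. by move=> h; exists (Ordinal h). Qed.


Lemma plab_lt n s x : (forall k, k < n -> s k < n) -> x < n + n -> plab n s x < n.
Proof. move=> hs hx; rewrite /plab; case: (ltnP x n) => // h; apply: hs; lia. Qed.

Lemma plab_top n s k : k < n -> plab n s k = k.
Proof. by rewrite /plab => ->. Qed.
Lemma plab_bot n s k : n <= k -> plab n s k = s (k - n).
Proof. by rewrite /plab ltnNge => ->. Qed.

Lemma pmul_P n (s t : nat -> nat) :
  (forall k, k < n -> s k < n) -> (forall k, k < n -> t k < n) ->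
  pmul (Plab n s) (Plab n t) = Plab n (fun k => s (t k)).
Proof.
move=> hs ht.
set I := Plab n s; set J := Plab n t.
have csym : connect_sym (pedge I J) := sym_connect_sym (pedge_sym (lab_setpart _ _) (lab_setpart _ _)).
pose l (u : pt n + pt n) := match u with inl x => plab n s x | inr y => s (plab n t y) end.
have sound : forall u v, pedge I J u v -> l u = l v.
  move=> [x|x] [y|y] /=; rewrite ?inE.
  - by move/eqP.
  - move=> /andP [/eqP xy yn]; rewrite /plab xy yn; case: ifP => [|_]; first lia.
    by congr s; lia.
  - move=> /andP [/eqP xy yn]; rewrite /plab xy yn; case: ifP => [|_]; first lia.
    by congr s; lia.
  - by move/eqP => ->.
have ltl : forall u, l u < n.
  move=> [x|y] /=; first by apply: plab_lt.
  by apply: hs; apply: plab_lt.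
have canon : forall u (w : pt n), val w = l u -> connect (pedge I J) u (inl w).
  have c1 : forall (x w : pt n), val w = plab n s x -> connect (pedge I J) (inl x) (inl w).
    move=> x w wE; apply: connect1 => /=; rewrite inE wE.
    by rewrite (plab_top _ (plab_lt hs (ltn_ord x))).
  have c2 : forall (y w : pt n), y < n -> val w = s y -> connect (pedge I J) (inr y) (inl w).
    move=> y w yn wE.
    have [x xE] : exists x : pt n, val x = n + y by apply: ex_pt; lia.
    apply: connect_trans (c1 x w _); last by rewrite wE /plab xE; case: ifP => [|_]; [lia| congr s; lia].
    by apply: connect1 => /=; rewrite xE eqxx yn.
  move=> [x|y] w /= wE; first exact: c1.
  case: (ltnP y n) => yn.
    by apply: c2 => //; apply: etrans wE _; rewrite plab_top.
  have [y' y'E] : exists y' : pt n, val y' = t (y - n).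
    by apply: ex_pt; have := ht (y - n); have := ltn_ord y; lia.
  apply: connect_trans (c2 y' w _ _); last first.
  - by apply: etrans wE _; rewrite plab_bot // y'E.
  - by rewrite y'E; apply: ht; have := ltn_ord y; lia.
  apply: connect1 => /=; rewrite inE y'E /plab ltnNge yn /=.
  by rewrite ht //; have := ltn_ord y; lia.
have lp : forall a : pt n, l (pnode a) = plab n (fun k => s (t k)) a.
  move=> a; rewrite /pnode /plab; case: ifP => an /=; rewrite /plab an //.
apply/setP => [[a b]]; rewrite !inE /=; apply/idP/idP.
- by move/(connect_lab sound); rewrite !lp => ->.
- move/eqP; rewrite -!lp => E.
  have [w wE] : exists w : pt n, val w = l (pnode a) by apply: ex_pt; have := ltl (pnode a); lia.
  apply: connect_trans (canon _ _ wE) _.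
  by rewrite csym; apply: canon; rewrite -E.
Qed.


Definition nval n (u : pt n + pt n) : nat := match u with inl x => val x | inr y => val y end.

Lemma pmul_B n (S T : nat -> bool) :
  pmul (Blab n S) (Blab n T) = Blab n (fun k => S k || T k).
Proof.
set U := fun k => S k || T k.
set I := Blab n S; set J := Blab n T.
have csym : connect_sym (pedge I J) := sym_connect_sym (pedge_sym (lab_setpart _ _) (lab_setpart _ _)).
pose l (u : pt n + pt n) := rep U (nval u %% n).
have sound : forall u v, pedge I J u v -> l u = l v.
  move=> [x|x] [y|y] /=; rewrite ?inE /l /=.
  - by move/eqP; apply: rep_sub => k; rewrite /U => ->.
  - by move=> /andP [/eqP -> _]; rewrite modnDl.
  - by move=> /andP [/eqP -> _]; rewrite modnDl.
  - by move/eqP; apply: rep_sub => k; rewrite /U => ->; rewrite orbT.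
have c1 : forall u (r : pt n), val r = nval u %% n -> connect (pedge I J) u (inl r).
  move=> [x|y] r /= rE.
    by apply: connect1 => /=; rewrite inE rE modn_mod.
  have n0 : 0 < n by have := ltn_ord y; lia.
  have [r' r'E] : exists r' : pt n, val r' = y %% n.
    by apply: ex_pt; have := ltn_pmod y n0; lia.
  have [x' x'E] : exists x' : pt n, val x' = n + r'.
    by apply: ex_pt; rewrite r'E; have := ltn_pmod y n0; lia.
  apply: (@connect_trans _ _ (inr r')).
    by apply: connect1 => /=; rewrite inE r'E modn_mod.
  apply: (@connect_trans _ _ (inl x')).
    by apply: connect1 => /=; rewrite x'E eqxx r'E ltn_pmod.
  by apply: connect1 => /=; rewrite inE x'E rE r'E modnDl !modn_mod.
have c2 : forall k (x w : pt n), k < n -> val x = k -> val w = rep U k ->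
    connect (pedge I J) (inl x) (inl w).
  elim=> [|k IH] x w kn xE wE.
    by have -> : x = w by apply: val_inj; rewrite xE wE.
  move: wE; rewrite rep_S; case Uk: (U k) => wE; last first.
    by have -> : x = w by apply: val_inj; rewrite xE wE.
  have [xk xkE] : exists xk : pt n, val xk = k by apply: ex_pt; lia.
  apply: (@connect_trans _ _ (inl xk)); last by apply: IH => //; lia.
  move: Uk; rewrite /U; case Sk: (S k) => /= Tk.
    by apply: connect1 => /=; rewrite inE xE xkE !modn_small ?rep_S ?Sk //; lia.
  apply: (@connect_trans _ _ (inr x)).
    by rewrite csym; apply: c1; rewrite /= modn_small // xE.
  apply: (@connect_trans _ _ (inr xk)); last by apply: c1; rewrite /= modn_small // xkE; lia.
  by apply: connect1 => /=; rewrite inE xE xkE !modn_small ?rep_S ?Tk //; lia.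
have lp : forall a : pt n, l (pnode a) = rep U (a %% n).
  by move=> a; rewrite /l /pnode; case: ifP.
apply/setP => [[a b]]; rewrite !inE /=; apply/idP/idP.
- by move/(connect_lab sound); rewrite !lp => ->.
- move/eqP => E.
  have n0 : 0 < n by have := ltn_ord a; lia.
  have cw : forall c : pt n, exists2 w : pt n, val w = rep U (c %% n) & connect (pedge I J) (pnode c) (inl w).
    move=> c.
    have [r rE] : exists r : pt n, val r = c %% n by apply: ex_pt; have := ltn_pmod c n0; lia.
    have [w wE] : exists w : pt n, val w = rep U (c %% n).
      by apply: ex_pt; have := rep_le U (c %% n); have := ltn_pmod c n0; lia.
    exists w => //; apply: (@connect_trans _ _ (inl r)).
      by apply: c1; rewrite /pnode; case: ifP.
    by apply: (c2 (c %% n)) => //; apply: ltn_pmod.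
  have [wa waE ca] := cw a; have [wb wbE cb] := cw b.
  have wE : wb = wa by apply: val_inj; rewrite waE wbE E.
  by rewrite wE in cb; apply: connect_trans ca _; rewrite csym.
Qed.


Definition swap (i k : nat) := if k == i then i.+1 else if k == i.+1 then i else k.

Lemma sgen_P n i : sgen n i = Plab n (swap i).
Proof. by []. Qed.

Lemma rep1 i k : rep (fun j => j == i) k = (if k == i.+1 then i else k).
Proof.
elim: k => [|k IH] //=; rewrite IH eqSS; case: (eqVneq k i) => [->|ki] //.
by case: ifP.
Qed.

Lemma bgen_B n i : bgen n i = Blab n (fun j => j == i).
Proof. by apply/setP => [[a b]]; rewrite !inE /= !rep1. Qed.

Lemma pid_P n : pid n = Plab n (fun k => k).
Proof.
apply/setP => [[a b]]; rewrite !inE /=.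
have h : forall x : pt n, x %% n = plab n (fun k => k) x.
  move=> x; have := ltn_ord x; rewrite /plab; case: (ltnP x n) => xn xl; first by rewrite modn_small.
  have -> : (x : nat) = (x - n) + n by lia.
  by rewrite modnDr modn_small; lia.
by rewrite !h.
Qed.

Lemma rep0 k : rep (fun _ => false) k = k.
Proof. by elim: k. Qed.

Lemma pid_B n : pid n = Blab n (fun _ => false).
Proof. by apply/setP => [[a b]]; rewrite !inE /= !rep0. Qed.

Lemma Plab_ext n s t : (forall k, k < n -> s k = t k) -> Plab n s = Plab n t.
Proof.
move=> h; apply/setP => [[a b]]; rewrite !inE /=.
have e : forall x : pt n, plab n s x = plab n t x.
  by move=> x; have := ltn_ord x; rewrite /plab; case: ifP => // _ xl; apply: h; lia.
by rewrite !e.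
Qed.

Lemma Blab_ext n (S T : nat -> bool) : (forall j, j.+1 < n -> S j = T j) -> Blab n S = Blab n T.
Proof.
move=> h; apply/setP => [[a b]]; rewrite !inE /=.
have e : forall x : pt n, rep S (x %% n) = rep T (x %% n).
  move=> x; have n0 : 0 < n by have := ltn_ord x; lia.
  apply: rep_ext => j jl; apply: h; have := ltn_pmod x n0; lia.
by rewrite !e.
Qed.

Definition good n (s : nat -> nat) (S : nat -> bool) :=
  [/\ forall k, k < n -> s k < n,
      forall j, j < n -> exists2 k, k < n & s k = j,
      forall j k, j < n -> k < n -> s j = s k -> j = k,
      forall k, S k -> k.+1 < n &
      forall k, k < n -> rep S (s k) = rep S k].

Lemma good_mul n s S t T : good n s S -> good n t T ->
  good n (fun k => s (t k)) (fun k => S k || T k).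
Proof.
move=> [s1 s2 s3 s4 s5] [t1 t2 t3 t4 t5]; split.
- by move=> k kn; apply: s1; apply: t1.
- move=> j jn; have [k kn <-] := s2 j jn; have [k' k'n <-] := t2 k kn.
  by exists k'.
- by move=> j k jn kn E; apply: t3 => //; apply: s3 => //; apply: t1.
- by move=> k /orP [/s4|/t4].
- move=> k kn.
  have e1 : rep (fun k => S k || T k) (s (t k)) = rep (fun k => S k || T k) (t k).
    apply: (rep_sub (S := S)); first by move=> j ->.
    by apply: s5; apply: t1.
  have e2 : rep (fun k => S k || T k) (t k) = rep (fun k => S k || T k) k.
    apply: (rep_sub (S := T)); first by move=> j ->; rewrite orbT.
    by apply: t5.
  by rewrite e1 e2.
Qed.

Lemma swapK i k : swap i (swap i k) = k.
Proof.
rewrite /swap; case: (eqVneq k i) => [->|ki].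
  by rewrite eqxx (gtn_eqF (ltnSn i)).
case: (eqVneq k i.+1) => [->|ki1]; first by rewrite eqxx.
by rewrite (negbTE ki) (negbTE ki1).
Qed.

Lemma swap_lt n i k : i.+1 < n -> k < n -> swap i k < n.
Proof. by rewrite /swap; case: ifP => _; [lia|case: ifP => _; lia]. Qed.

Lemma rep_swap (S : nat -> bool) i k : S i -> rep S (swap i k) = rep S k.
Proof.
move=> Si; rewrite /swap; case: (eqVneq k i) => [->|ki].
  by rewrite rep_S Si.
by case: (eqVneq k i.+1) => [->|//]; rewrite rep_S Si.
Qed.

Lemma good_swap n s S i : good n s S -> S i -> good n (fun k => s (swap i k)) S.
Proof.
move=> [s1 s2 s3 s4 s5] Si; have i1 := s4 _ Si; split.
- by move=> k kn; apply: s1; apply: swap_lt.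
- move=> j jn; have [k kn <-] := s2 j jn; exists (swap i k); first by apply: swap_lt.
  by rewrite swapK.
- move=> j k jn kn /s3 E; rewrite -(swapK i j) -(swapK i k) E //; exact: swap_lt.
- exact: s4.
- by move=> k kn; rewrite s5 ?rep_swap //; apply: swap_lt.
Qed.

Lemma good_gen n i (b : bool) : i.+1 < n ->
  good n (fun k => if b then swap i k else k) (fun j => j == i).
Proof.
move=> i1; split.
- by move=> k kn; case: b => //; apply: swap_lt.
- move=> j jn; exists (if b then swap i j else j); first by case: b => //; apply: swap_lt.
  by case: b => //; rewrite swapK.
- move=> j k jn kn; case: b => // E; by rewrite -(swapK i j) -(swapK i k) E.
- by move=> k /eqP ->.
- by move=> k kn; case: b => //; rewrite rep_swap.
Qed.

Lemma good_id n : good n (fun k => k) (fun _ => false).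
Proof. by split => // j jn; exists j. Qed.


Lemma rep_plab n s S (x : pt n) : good n s S -> rep S (x %% n) = rep S (plab n s x).
Proof.
move=> [s1 s2 s3 s4 s5]; have := ltn_ord x; rewrite /plab.
case: (ltnP x n) => xn xl; first by rewrite modn_small.
have -> : (x : nat) = (x - n) + n by lia.
rewrite modnDr modn_small; last lia.
rewrite addnK s5 //; lia.
Qed.

Lemma inBR_good n s S : good n s S -> in_BR (Plab n s, Blab n S).
Proof.
move=> g; have [s1 s2 s3 s4 s5] := g.
apply/and3P; split => /=.
- apply/andP; split; first exact: lab_setpart.
  apply/forallP => x; apply/andP; split.
  + have [t tE] : exists t : pt n, val t = plab n s x.
      by apply: ex_pt; have := plab_lt s1 (ltn_ord x); lia.
    apply/cards1P; exists t; apply/setP => y; rewrite !inE /=.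
    case: (ltnP y n) => yn.
      by rewrite andbT (plab_top _ yn) -tE eq_sym.
    rewrite andbF; apply/esym/eqP => yt; move: yn; rewrite yt tE.
    by have := plab_lt s1 (ltn_ord x); lia.
  + have [j jn jE] := s2 (plab n s x) (plab_lt s1 (ltn_ord x)).
    have [b bE] : exists b : pt n, val b = n + j by apply: ex_pt; lia.
    apply/cards1P; exists b; apply/setP => y; rewrite !inE /=.
    case: (ltnP y n) => yn.
      rewrite andbF; apply/esym/eqP => yb; move: yn; rewrite yb bE; lia.
    rewrite andbT (plab_bot _ yn) -jE.
    change ((s j == s (y - n)) = (val y == val b)); rewrite bE.
    apply/eqP/eqP => [E|->]; last by congr s; lia.
    have kn : y - n < n by have := ltn_ord y; lia.
    have := s3 _ _ jn kn E; move: yn; rewrite /=; lia.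
- apply/and3P; split; first exact: lab_setpart.
  + rewrite pid_B; apply: prefinesI => [x|x y z]; rewrite !inE //.
    by move=> /eqP -> /eqP; rewrite !rep0 => ->.
  + apply/forallP => x; apply/forallP => y; apply/forallP => z; apply/implyP.
    move=> /and4P [zn xy yz]; rewrite !inE /= !modn_small; try lia.
    move=> /eqP E; apply/eqP; apply/eqP; rewrite eqn_leq rep_mono //=.
    by rewrite E rep_mono.
- apply: prefinesI => [x|x y z]; rewrite !inE //.
  by move=> /eqP -> /eqP E; rewrite (rep_plab _ g) E -(rep_plab _ g).
Qed.


Lemma gen_form n g : g \in BR_gens n -> exists b i, i.+1 < n /\
  g = (Plab n (fun k => if b then swap i k else k), Blab n (fun j => j == i)).
Proof.
rewrite mem_cat => /orP [] /mapP [i]; rewrite mem_iota add0n => /andP [_ ilt] ->.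
- by exists false, i; split; [lia | rewrite /egen pid_P bgen_B].
- by exists true, i; split; [lia | rewrite /zgen sgen_P bgen_B].
Qed.

Lemma brprod_good n s : all (fun g => g \in BR_gens n) s ->
  exists s0 S, brprod s = (Plab n s0, Blab n S) /\ good n s0 S.
Proof.
elim: s => [|g s IH] /=.
  move=> _; exists (fun k => k), (fun _ => false); split; last exact: good_id.
  by rewrite /brprod /= /brid {1}pid_P pid_B.
move=> /andP [/gen_form [b [i [i1 ->]]] /IH [s0 [S [E g0]]]].
rewrite /brprod /= -/(brprod s) E /brmul /=.
have gg := good_gen b i1.
exists (fun k => (if b then swap i (s0 k) else s0 k)), (fun k => (k == i) || S k).
split; last exact: (good_mul gg g0).
case: gg => [h1 _ _ _ _]; case: g0 => [h2 _ _ _ _].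
by rewrite pmul_P // pmul_B.
Qed.

Lemma BR_if n p : (exists s, all (fun g => g \in BR_gens n) s /\ p = brprod s) -> in_BR p.
Proof.
move=> [s [/brprod_good [s0 [S [E g]]] ->]]; rewrite E; exact: inBR_good.
Qed.


Fixpoint compw (l : seq nat) (k : nat) : nat := if l is i :: l' then swap i (compw l' k) else k.

Lemma comp_rcons l j k : compw (rcons l j) k = compw l (swap j k).
Proof. by elim: l => //= i l ->. Qed.

Lemma decomp n S : forall d s, good n s S -> (forall k, d <= k -> k < n -> s k = k) ->
  exists2 l, all S l & forall k, k < n -> s k = compw l k.
Proof.
elim=> [|d IH] s g fx.
  by exists [::] => // k kn; apply: fx.
case: (ltnP d n) => dn; last first.
  by apply: (IH s g) => k dk kn; apply: fx; lia.
have [g1 g2 g3 g4 g5] := g.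
have [j jn jE] := g2 d dn.
have jd : j <= d.
  case: (leqP j d) => // dj; have := fx j dj jn; lia.
suff inner : forall m s j, j + m = d -> good n s S -> (forall k, d.+1 <= k -> k < n -> s k = k) ->
    s j = d -> exists2 l, all S l & forall k, k < n -> s k = compw l k.
  by apply: (inner (d - j) s j) => //; lia.
elim=> [|m IHm] s' j' jm g' fx' sj.
  apply: (IH s' g') => k dk kn; case: (eqVneq k d) => [->|kd]; first by rewrite -{1}jm addn0.
  by apply: fx' => //; lia.
have [h1 h2 h3 h4 h5] := g'.
have Sj : S j'.
  have jn' : j' < n by lia.
  have := h5 j' jn'; rewrite sj => /esym /(rep_eq S (_ : j' <= d)) H.
  by apply: H; lia.
have fx2 : forall k, d.+1 <= k -> k < n -> s' (swap j' k) = k.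
  move=> k k1 k2; rewrite /swap; case: ifP => [/eqP|_]; first lia.
  case: ifP => [/eqP|_]; first lia.
  by apply: fx'.
have sj2 : s' (swap j' j'.+1) = d.
  by rewrite /swap; case: ifP => [/eqP|_]; [lia|rewrite eqxx].
have [l Sl E] := IHm (fun k => s' (swap j' k)) j'.+1 (ltac:(lia)) (good_swap g' Sj) fx2 sj2.
exists (rcons l j'); first by rewrite all_rcons Sj.
move=> k kn; rewrite comp_rcons -E; first by rewrite swapK.
by apply: swap_lt => //; apply: h4.
Qed.


Lemma comp_lt n l k : all (fun i => i.+1 < n) l -> k < n -> compw l k < n.
Proof.
elim: l => //= i l IH /andP [i1 al] kn; apply: swap_lt => //; exact: IH.
Qed.

Lemma brprod_E n E : all (fun i => i.+1 < n) E ->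
  brprod (map (egen n) E) = (Plab n (fun k => k), Blab n (fun k => k \in E)).
Proof.
elim: E => [|i E IH] /=.
  by move=> _; rewrite /brprod /= /brid {1}pid_P pid_B.
move=> /andP [i1 /IH]; rewrite /brprod /= -/(brprod _) => ->.
rewrite /brmul /egen /= pid_P bgen_B pmul_P // pmul_B.
by [].
Qed.

Lemma brprod_ZE n l E : all (fun i => i.+1 < n) l -> all (fun i => i.+1 < n) E ->
  brprod (map (zgen n) l ++ map (egen n) E) =
  (Plab n (compw l), Blab n (fun k => (k \in l) || (k \in E))).
Proof.
move=> + aE; elim: l => [|i l IH] /=.
  by move=> _; rewrite brprod_E.
move=> /andP [i1 al]; rewrite /brprod /= -/(brprod _) IH //.
rewrite /brmul /zgen /= sgen_P bgen_B pmul_P //; last by move=> k; apply: comp_lt.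
  rewrite pmul_B.
  congr pair; apply: Blab_ext => j _; rewrite in_cons orbA //.
by move=> k kn; apply: swap_lt.
Qed.


Lemma card1_uniq n (I : part n) x (P : pred (pt n)) :
  #|[set y in pblk I x | P y]| == 1 ->
  exists t, [/\ P t, (x, t) \in I & forall y, P y -> (x, y) \in I -> y = t].
Proof.
move=> /cards1P [t tE]; exists t.
have : t \in [set y in pblk I x | P y] by rewrite tE set11.
rewrite !inE => /andP [h1 h2]; split => // y Py xy.
by apply/set1P; rewrite -tE !inE xy Py.
Qed.

Definition tp n (I : part n) (x : pt n) : nat :=
  oapp (fun t : pt n => val t) 0 [pick y : pt n | ((x, y) \in I) && (y < n)].

Definition sig n (I : part n) (j : nat) : nat :=
  oapp (tp I) 0 [pick x : pt n | val x == n + j].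

Definition relN n (J : part n) (a b : nat) : bool :=
  [exists x : pt n, exists y : pt n, [&& val x == a, val y == b & (x, y) \in J]].

Definition Sof n (J : part n) (k : nat) : bool := (k.+1 < n) && relN J k k.+1.

Section Ext.
Variables (n : nat) (I J : part n).
Hypothesis (HI : in_Sn I) (HJ : boxed J) (IJ : prefines I J).

Let spI : is_setpart I. Proof. by case/andP: HI. Qed.
Let spJ : is_setpart J. Proof. by case/and3P: HJ. Qed.

Lemma tpP x : exists t : pt n,
  [/\ t < n, (x, t) \in I, tp I x = t & forall y : pt n, y < n -> (x, y) \in I -> y = t].
Proof.
have := HI; case/andP => _ /forallP /(_ x) /andP [c1 _].
have [t [tn xt tu]] := card1_uniq c1.
exists t; split => //; rewrite /tp; case: pickP => [y /andP [xy yn]|H] /=.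
  by rewrite (tu y yn xy).
by move: (H t); rewrite xt tn.
Qed.

Lemma botP x : exists b : pt n,
  [/\ n <= b, (x, b) \in I & forall y : pt n, n <= y -> (x, y) \in I -> y = b].
Proof.
have := HI; case/andP => _ /forallP /(_ x) /andP [_ c2].
exact: card1_uniq c2.
Qed.

Lemma tp_rel x y : ((x, y) \in I) <-> tp I x = tp I y.
Proof.
have [tx [txn xtx tpx ux]] := tpP x; have [ty [tyn yty tpy uy]] := tpP y.
rewrite tpx tpy; split.
- move=> xy; have := ux ty tyn (sp_trans spI xy yty); by move=> ->.
- move=> E; have ee : tx = ty by apply: val_inj.
  by apply: (sp_trans spI xtx); rewrite ee; apply: sp_sym.
Qed.

Lemma tp_top (x : pt n) : x < n -> tp I x = x.
Proof.
move=> xn; have [t [tn xt -> u]] := tpP x.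
by rewrite (u x xn (sp_refl spI x)).
Qed.

Lemma sigE (x : pt n) : n <= x -> sig I (x - n) = tp I x.
Proof.
move=> xn; rewrite /sig; case: pickP => [y /eqP yE|H] /=.
  by have -> : y = x by apply: val_inj; rewrite /= yE; lia.
by move: (H x); rewrite subnKC // eqxx.
Qed.

Lemma plab_tp (x : pt n) : plab n (sig I) x = tp I x.
Proof.
rewrite /plab; case: (ltnP x n) => xn; first by rewrite tp_top.
by rewrite sigE.
Qed.

Lemma I_eq : I = Plab n (sig I).
Proof.
apply/setP => [[x y]]; rewrite inE /= !plab_tp.
by apply/idP/eqP => /tp_rel.
Qed.

Lemma relNE (x y : pt n) : relN J x y = ((x, y) \in J).
Proof.
apply/existsP/idP => [[x' /existsP [y' /and3P [/eqP ex /eqP ey xy]]]|xy].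
  have -> : x = x' by apply: val_inj.
  by have -> : y = y' by apply: val_inj.
by exists x; apply/existsP; exists y; rewrite !eqxx xy.
Qed.

Lemma relN_pt a b : relN J a b -> exists x y : pt n, [/\ nat_of_ord x = a, nat_of_ord y = b & (x, y) \in J].
Proof.
by move=> /existsP [x /existsP [y /and3P [/eqP ex /eqP ey xy]]]; exists x, y.
Qed.

Lemma relN_trans a b c : relN J a b -> relN J b c -> relN J a c.
Proof.
move=> /relN_pt [x [y [ex ey xy]]] /relN_pt [y' [z [ey' ez yz]]].
have yy : y = y' by apply: val_inj; rewrite /= ey ey'.
rewrite -ex -ez relNE; rewrite yy in xy; exact: (sp_trans spJ xy yz).
Qed.

Lemma relN_sym a b : relN J a b -> relN J b a.
Proof.
move=> /relN_pt [x [y [ex ey xy]]]; rewrite -ex -ey relNE; exact: sp_sym.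
Qed.

Lemma relN_refl a : a < n + n -> relN J a a.
Proof.
move=> al; have [x ex] := ex_pt al; rewrite -ex relNE; exact: sp_refl.
Qed.

Lemma J_top a b : a <= b -> b < n -> (relN J a b <-> forall k, a <= k < b -> Sof J k).
Proof.
move=> ab bn; split.
- move=> /relN_pt [x [z [ex ez xz]]] k /andP [ak kb].
  have lin : forall y : pt n, x <= y -> y <= z -> (x, y) \in J.
    move=> y xy yz; have := HJ; case/and3P => _ _ /forallP /(_ x) /forallP /(_ y) /forallP /(_ z).
    by move/implyP; apply; rewrite xz xy yz ez bn.
  have [xk ek] : exists xk : pt n, nat_of_ord xk = k by apply: ex_pt; lia.
  have [xk1 ek1] : exists xk1 : pt n, nat_of_ord xk1 = k.+1 by apply: ex_pt; lia.
  rewrite /Sof (_ : k.+1 < n); last lia.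
  rewrite -ek1 -ek relNE.
  have h1 := lin xk (ltac:(lia)) (ltac:(lia)); have h2 := lin xk1 (ltac:(lia)) (ltac:(lia)).
  exact: (sp_trans spJ (sp_sym spJ h1) h2).
- move=> H; have -> : b = a + (b - a) by lia.
  have : a + (b - a) <= b by lia.
  elim: (b - a) => [|m IH] hm; first by rewrite addn0; apply: relN_refl; lia.
  apply: relN_trans (IH _) _; first lia.
  have := H (a + m) (ltac:(lia)); rewrite /Sof addnS => /andP [_]; done.
Qed.

Lemma relN_rep a b : a < n -> b < n -> (relN J a b <-> rep (Sof J) a = rep (Sof J) b).
Proof.
wlog ab : a b / a <= b.
  move=> hw an bn; case/orP: (leq_total a b) => h; first exact: hw.
  split => [/relN_sym/(hw _ _ h bn an) -> //|E]; apply: relN_sym; apply/(hw _ _ h bn an).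
  by rewrite E.
move=> an bn; rewrite J_top // rep_eq //.
Qed.

Lemma J_eq : J = Blab n (Sof J).
Proof.
apply/setP => [[x y]]; rewrite inE /=.
have n0 : 0 < n by have := ltn_ord x; lia.
have red : forall z : pt n, exists2 r : pt n, nat_of_ord r = z %% n & (z, r) \in J.
  move=> z; have [r er] : exists r : pt n, nat_of_ord r = z %% n by apply: ex_pt; have := ltn_pmod z n0; lia.
  exists r => //; apply: (@prefines_sub n (pid n) J).
  - by case/and3P: HJ.
  - exact: spJ.
  - by rewrite inE /= er modn_mod.
have [rx ex xr] := red x; have [ry ey yr] := red y.
have -> : ((x, y) \in J) = ((rx, ry) \in J).
  apply/idP/idP => h.
  - exact: (sp_trans spJ (sp_sym spJ xr) (sp_trans spJ h yr)).
  - exact: (sp_trans spJ xr (sp_trans spJ h (sp_sym spJ yr))).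
rewrite -relNE ex ey.
have key := relN_rep (ltn_pmod x n0) (ltn_pmod y n0).
by apply/idP/eqP => h; [exact: (proj1 key h) | exact: (proj2 key h)].
Qed.

Lemma good_ext : good n (sig I) (Sof J).
Proof.
split.
- move=> j jn; have [x ex] : exists x : pt n, nat_of_ord x = n + j by apply: ex_pt; lia.
  have := sigE (x := x) (ltac:(lia)); rewrite ex addKn => ->.
  by have [t [tn _ -> _]] := tpP x.
- move=> i iln; have [ti ei] : exists ti : pt n, nat_of_ord ti = i by apply: ex_pt; lia.
  have [b [bn tib _]] := botP ti.
  exists (b - n); first by have := ltn_ord b; lia.
  rewrite sigE // -(proj1 (tp_rel _ _) tib) tp_top ei //.
- move=> j k jn kn E.
  have [xj ej] : exists x : pt n, nat_of_ord x = n + j by apply: ex_pt; lia.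
  have [xk ek] : exists x : pt n, nat_of_ord x = n + k by apply: ex_pt; lia.
  move: E; rewrite -(addKn n j) -(addKn n k) -ej -ek !sigE ?ej ?ek; try lia.
  move/tp_rel => xjk.
  have [b [_ _ u]] := botP xj.
  have e1 := u xj (ltac:(lia)) (sp_refl spI xj).
  have e2 := u xk (ltac:(lia)) xjk.
  have : nat_of_ord xj = nat_of_ord xk by rewrite e1 e2.
  rewrite ej ek; lia.
- by move=> k /andP [].
- move=> k kn.
  have [x ex] : exists x : pt n, nat_of_ord x = n + k by apply: ex_pt; lia.
  have [t [tn xt tpE _]] := tpP x.
  have sk : sig I k = t by rewrite -tpE -sigE ex ?addKn //; lia.
  have xtJ : (x, t) \in J by apply: prefines_sub xt.
  move: xtJ; rewrite {1}J_eq inE /= ex modnDl modn_small // sk modn_small //.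
  by move/eqP.
Qed.

End Ext.


Theorem proposition5p12 (n : nat) (p : part n * part n) :
  in_BR p <->
  exists s : seq (part n * part n),
    all (fun g => g \in BR_gens n) s /\ p = brprod s.
Proof.
split; last exact: BR_if.
case: p => [I J] /and3P [/= HI HJ IJ].
have g := good_ext HI HJ IJ.
have [l Sl E] := decomp (d := n) g (fun k h1 h2 => ltac:(lia)).
have [_ _ _ g4 _] := g.
have al : all (fun i => i.+1 < n) l by apply/allP => i /(allP Sl) /g4.
set F := filter (Sof J) (iota 0 n.-1).
have aF : all (fun i => i.+1 < n) F by apply/allP => i; rewrite mem_filter => /andP [/g4].
exists (map (zgen n) l ++ map (egen n) F); split.
  rewrite all_cat; apply/andP; split; apply/allP => g' /mapP [i iin ->]; rewrite mem_cat; apply/orP.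
  - right; apply: map_f; rewrite mem_iota; have := allP al i iin; lia.
  - left; apply: map_f; rewrite mem_iota; have := allP aF i iin; lia.
rewrite brprod_ZE //; congr pair.
  by rewrite {1}(I_eq HI HJ IJ); apply: Plab_ext.
rewrite {1}(J_eq HI HJ IJ); apply: Blab_ext => j jn.
rewrite /F mem_filter mem_iota; case Sj: (Sof J j) => /=.
  by rewrite (_ : j < 0 + n.-1) ?orbT //; lia.
by rewrite orbF; apply/esym/negbTE/negP => /(allP Sl); rewrite Sj.
Qed.
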